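(* There is an absolute constant $c>0$ such that the following holds. Let $t,n,k\ge1$ and $d\ge0$ be integers with $(d+1)\mid t$ and $k(d+1)\ge 4$. Then every $d$-runlength constrained $k$-disjunct binary $t\times n$ matrix satisfies $$t\ge\min\left(n,\;c\,\frac{k(d+1)\log n}{\log(k(d+1))}\right).$$ (In the paper's notation: $t\ge\min\big(n,\Omega\big(\tfrac{k d\log n}{\log(kd)}\big)\big)$.)
   Context: $\log$ denotes the base-2 logarithm. A binary $t\times n$ matrix $M$ is $d$-runlength constrained if in every column, any two $1$'s are separated by a run of at least $d$ zeros, i.e. $M_{ij}=M_{i'j}=1$ with $i<i'$ implies $i'-i\ge d+1$. A binary matrix $M$ is $k$-disjunct if for every column $j$ and every set $S$ of at most $k$ columns with $j\notin S$, $\mathsf{supp}(M_{\cdot j})\not\subseteq\bigcup_{j'\in S}\mathsf{supp}(M_{\cdot j'})$, where $\mathsf{supp}$ denotes the support. *)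

(* Defs.v *)
(* binary t x n matrices as functions nat -> nat -> bool,
   entries outside [0,t) x [0,n) are ignored. *)
From Stdlib Require Import Reals Arith List.
Open Scope R_scope.

Definition log2 (x : R) : R := ln x / ln 2.

Definition runlength_constrained (t n d : nat) (M : nat -> nat -> bool) : Prop :=
  forall j i i' : nat, (j < n)%nat -> (i < i')%nat -> (i' < t)%nat ->
    M i j = true -> M i' j = true -> (d + 1 <= i' - i)%nat.

(* M is k-disjunct: for every column j and every set S of at most k columns
   (given as a list; duplicates are harmless) with j not in S, the support of
   column j is not contained in the union of supports of the columns in S. *)
Definition disjunct (t n k : nat) (M : nat -> nat -> bool) : Prop :=
  forall (j : nat) (S : list nat), (j < n)%nat ->
    (forall j', In j' S -> (j' < n)%nat) -> (length S <= k)%nat -> ~ In j S ->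
    exists i : nat, (i < t)%nat /\ M i j = true /\
      (forall j', In j' S -> M i j' = false).

(* Main.v *)
Require Import Defs.
From Stdlib Require Import Reals Arith List Lia Lra Psatz ClassicalEpsilon Classical.
Open Scope nat_scope.

Definition own (t n k d : nat) (M : nat -> nat -> bool) (j r : nat) : Prop :=
  forall j', (j' < n)%nat -> j' <> j -> exists i, (i < t)%nat /\ M i j = true /\
    (i / (d + 1)) mod k = r /\ M i j' = false.

Lemma cover_build t n k d M j : forall k', (k' <= k)%nat ->
  (exists r, (r < k)%nat /\ own t n k d M j r) \/
  exists S, length S = k' /\ (forall x, In x S -> (x < n)%nat /\ x <> j) /\
    forall i, (i < t)%nat -> M i j = true -> ((i / (d + 1)) mod k < k')%nat ->
      exists x, In x S /\ M i x = true.
Proof.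
  induction k' as [|k' IH]; intros Hk.
  - right. exists nil. split; [reflexivity|]. split; [simpl; tauto|]. intros; lia.
  - destruct (IH ltac:(lia)) as [H|[S [HL [HS Hcov]]]]; [left; exact H|].
    destruct (classic (own t n k d M j k')) as [Ho|Hno].
    + left. exists k'. split; [lia|exact Ho].
    + unfold own in Hno.
      apply not_all_ex_not in Hno. destruct Hno as [x Hx].
      apply imply_to_and in Hx. destruct Hx as [Hxn Hx].
      apply imply_to_and in Hx. destruct Hx as [Hxj Hx].
      right. exists (x :: S). split; [simpl; lia|]. split.
      * intros y [<-|Hy]; [split; assumption| apply HS, Hy].
      * intros i Hi HM Hr.
        destruct (Nat.eq_dec ((i / (d + 1)) mod k) k') as [Heq|Hne].
        -- exists x. split; [left; reflexivity|].
           destruct (M i x) eqn:E; [reflexivity|].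
           exfalso. apply Hx. exists i. repeat split; assumption.
        -- destruct (Hcov i Hi HM ltac:(lia)) as [y [Hy HMy]].
           exists y. split; [right; exact Hy| exact HMy].
Qed.

Lemma own_exists t n k d M j : (1 <= k)%nat -> (j < n)%nat -> disjunct t n k M ->
  exists r, (r < k)%nat /\ own t n k d M j r.
Proof.
  intros Hk Hj Hdis.
  destruct (cover_build t n k d M j k (le_n k)) as [H|[S [HL [HS Hcov]]]]; [exact H|].
  exfalso. assert (HLk : (length S <= k)%nat) by lia.
  destruct (Hdis j S Hj (fun x Hx => proj1 (HS x Hx)) HLk
    (fun H => proj2 (HS j H) eq_refl)) as [i [Hi [HMi Hz]]].
  destruct (Hcov i Hi HMi (Nat.mod_upper_bound (i / (d + 1)) k ltac:(lia))) as [y [Hy HMy]].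
  rewrite Hz in HMy by exact Hy. discriminate.
Qed.

Lemma res_eq k d b p : (1 <= k)%nat -> (p < k * (d + 1))%nat ->
  (((b * (k * (d + 1)) + p) / (d + 1)) mod k = p / (d + 1))%nat.
Proof.
  intros Hk Hp.
  replace (b * (k * (d + 1)) + p)%nat with ((b * k) * (d + 1) + p)%nat by ring.
  rewrite Nat.div_add_l by lia.
  replace (b * k + p / (d + 1))%nat with (p / (d + 1) + b * k)%nat by ring.
  rewrite Nat.Div0.mod_add. apply Nat.mod_small.
  apply Nat.Div0.div_lt_upper_bound. lia.
Qed.

Lemma uniq_pos t n k d M j b p p' : (1 <= k)%nat -> runlength_constrained t n d M ->
  (j < n)%nat -> (p < k * (d + 1))%nat -> (p' < k * (d + 1))%nat ->
  (b * (k * (d + 1)) + p < t)%nat -> (b * (k * (d + 1)) + p' < t)%nat ->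
  M (b * (k * (d + 1)) + p)%nat j = true -> M (b * (k * (d + 1)) + p')%nat j = true ->
  (((b * (k * (d + 1)) + p) / (d + 1)) mod k = ((b * (k * (d + 1)) + p') / (d + 1)) mod k)%nat ->
  p = p'.
Proof.
  intros Hk Hrl Hj Hp Hp' Ht Ht' HM HM' Hr.
  rewrite !res_eq in Hr by assumption.
  pose proof (Nat.div_mod p (d + 1) ltac:(lia)) as E1.
  pose proof (Nat.div_mod p' (d + 1) ltac:(lia)) as E2.
  pose proof (Nat.mod_upper_bound p (d + 1) ltac:(lia)) as U1.
  pose proof (Nat.mod_upper_bound p' (d + 1) ltac:(lia)) as U2.
  rewrite Hr in E1.
  destruct (Nat.lt_total p p') as [H|[H|H]]; [|exact H|].
  - assert (Hlt : (b * (k * (d + 1)) + p < b * (k * (d + 1)) + p')%nat) by lia.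
    pose proof (Hrl j _ _ Hj Hlt Ht' HM HM'). lia.
  - assert (Hlt : (b * (k * (d + 1)) + p' < b * (k * (d + 1)) + p)%nat) by lia.
    pose proof (Hrl j _ _ Hj Hlt Ht HM' HM). lia.
Qed.
Lemma digits_exist (B : nat) (dg : nat -> nat) (s : nat) :
  (0 < B)%nat -> (forall b, dg b < B)%nat ->
  exists c, (c < B ^ s)%nat /\ forall b, (b < s)%nat -> (c / B ^ b) mod B = dg b.
Proof.
  intros HB Hd. induction s as [|s IH].
  - exists 0%nat. simpl. split; [lia|]. intros; lia.
  - destruct IH as [c' [Hc' Hdig]].
    exists (c' + dg s * B ^ s)%nat. split.
    + simpl. specialize (Hd s). nia.
    + intros b Hb.
      assert (HBb : B ^ b <> 0%nat) by (apply Nat.pow_nonzero; lia).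
      destruct (Nat.eq_dec b s) as [->|Hne].
      * rewrite Nat.div_add by exact HBb. rewrite Nat.div_small by exact Hc'.
        simpl. apply Nat.mod_small, Hd.
      * assert (Hbs : (b < s)%nat) by lia.
        replace s with (b + S (s - b - 1))%nat at 2 by lia.
        rewrite Nat.pow_add_r.
        replace (dg s * (B ^ b * B ^ S (s - b - 1)))%nat
          with (dg s * B ^ S (s - b - 1) * B ^ b)%nat by ring.
        rewrite Nat.div_add by exact HBb.
        simpl Nat.pow.
        replace (dg s * (B * B ^ (s - b - 1)))%nat with (dg s * B ^ (s - b - 1) * B)%nat by ring.
        rewrite Nat.Div0.mod_add. apply Hdig; lia.
Qed.

Definition rowin (t k d c i : nat) : Prop :=
  exists b p, (b < t / (k * (d + 1)) + 1)%nat /\ (p < Nat.min (k * (d + 1)) t)%nat /\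
    i = (b * (k * (d + 1)) + p)%nat /\
    ((c / (Nat.min (k * (d + 1)) t + 1) ^ b) mod (Nat.min (k * (d + 1)) t + 1) = S p)%nat.

Definition Pcode (t n k d : nat) (M : nat -> nat -> bool) (j c : nat) : Prop :=
  (c < (Nat.min (k * (d + 1)) t + 1) ^ (t / (k * (d + 1)) + 1))%nat /\
  (forall i, rowin t k d c i -> M i j = true) /\
  (forall j', (j' < n)%nat -> j' <> j -> exists i, rowin t k d c i /\ M i j' = false).

Lemma code_exists t n k d M j : (1 <= k)%nat -> (1 <= t)%nat ->
  runlength_constrained t n d M -> disjunct t n k M -> (j < n)%nat ->
  exists c, Pcode t n k d M j c.
Proof.
  intros Hk Ht Hrl Hdis Hj.
  destruct (own_exists t n k d M j Hk Hj Hdis) as [r [Hr Ho]].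
  set (K := (k * (d + 1))%nat) in *.
  set (L := Nat.min K t).
  set (test := fun b p => (Nat.ltb (b * K + p) t && M (b * K + p)%nat j &&
                           Nat.eqb (((b * K + p) / (d + 1)) mod k) r)%bool).
  set (dg := fun b => match find (test b) (seq 0 L) with Some p => S p | None => 0%nat end).
  destruct (digits_exist (L + 1) dg (t / K + 1) ltac:(lia)) as [c [Hc Hdig]].
  { intros b. unfold dg. destruct (find (test b) (seq 0 L)) as [p|] eqn:E; [|lia].
    apply find_some in E. destruct E as [E _]. apply in_seq in E. lia. }
  exists c. split; [exact Hc|]. split.
  - intros i [b [p [Hb [Hp [-> Hd]]]]].
    fold K L in Hd. rewrite Hdig in Hd by exact Hb. unfold dg in Hd.
    destruct (find (test b) (seq 0 L)) as [p'|] eqn:E; [|discriminate].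
    injection Hd as <-. apply find_some in E. destruct E as [_ E].
    unfold test in E. apply andb_prop in E. destruct E as [E _].
    apply andb_prop in E. tauto.
  - intros j' Hj' Hne. destruct (Ho j' Hj' Hne) as [i [Hi [HMi [Hri HMj']]]].
    exists i. split; [|exact HMj'].
    assert (HK : K <> 0%nat) by (unfold K; lia).
    pose proof (Nat.div_mod i K HK) as Ei.
    pose proof (Nat.mod_upper_bound i K HK) as Ui.
    pose proof (Nat.Div0.div_le_mono i t K ltac:(lia)) as Di.
    pose proof (Nat.Div0.mod_le i K) as Li.
    unfold rowin. fold K L.
    exists (i / K)%nat, (i mod K)%nat.
    split; [lia|]. split; [unfold L; lia|]. split; [lia|].
    rewrite Hdig by lia. unfold dg.
    assert (Hib : i = (i / K * K + i mod K)%nat) by lia.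
    destruct (find (test (i / K)%nat) (seq 0 L)) as [p'|] eqn:E.
    + apply find_some in E. destruct E as [Ein E]. apply in_seq in Ein.
      unfold test in E. apply andb_prop in E. destruct E as [E E3].
      apply andb_prop in E. destruct E as [E1 E2].
      apply Nat.ltb_lt in E1. apply Nat.eqb_eq in E3.
      f_equal. symmetry.
      apply (uniq_pos t n k d M j (i / K) (i mod K) p' Hk Hrl Hj); fold K; try lia.
      * rewrite <- Hib. exact HMi.
      * exact E2.
      * rewrite <- Hib, E3. exact Hri.
    + exfalso. pose proof (find_none _ _ E (i mod K)%nat) as F.
      assert (Hin : In (i mod K)%nat (seq 0 L)) by (apply in_seq; unfold L; lia).
      specialize (F Hin). unfold test in F. rewrite <- Hib in F.
      rewrite HMi, Hri, Nat.eqb_refl in F.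
      assert (Hlt : Nat.ltb i t = true) by (apply Nat.ltb_lt; exact Hi).
      rewrite Hlt in F. discriminate.
Qed.

Lemma count_bound t n k d M : (1 <= k)%nat -> (1 <= t)%nat -> (2 <= n)%nat ->
  runlength_constrained t n d M -> disjunct t n k M ->
  n <= (Nat.min (k * (d + 1)) t + 1) ^ (t / (k * (d + 1)) + 1) - 1.
Proof.
  intros Hk Ht Hn Hrl Hdis.
  set (g := fun j => epsilon (inhabits 0) (fun c => j < n -> Pcode t n k d M j c)).
  assert (Hg : forall j, j < n -> Pcode t n k d M j (g j)).
  { intros j Hj. unfold g.
    assert (Ex : exists c, j < n -> Pcode t n k d M j c).
    { destruct (code_exists t n k d M j Hk Ht Hrl Hdis Hj) as [c Hc]. exists c. intros _; exact Hc. }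
    exact (epsilon_spec (inhabits 0) (fun c => j < n -> Pcode t n k d M j c) Ex Hj). }
  assert (Hinj : forall j1 j2, j1 < n -> j2 < n -> g j1 = g j2 -> j1 = j2).
  { intros j1 j2 H1 H2 E. destruct (Nat.eq_dec j1 j2) as [|Hne]; [assumption|exfalso].
    destruct (Hg j1 H1) as [_ [A1 _]]. destruct (Hg j2 H2) as [_ [_ A2]].
    destruct (A2 j1 H1 Hne) as [i [Hi HM]]. rewrite <- E in Hi.
    rewrite (A1 i Hi) in HM. discriminate. }
  assert (Hpos : forall j, j < n -> 0 < g j).
  { intros j Hj. destruct (Hg j Hj) as [_ [_ A]].
    assert (H1 : (if Nat.eq_dec j 0 then 1 else 0) < n) by (destruct (Nat.eq_dec j 0); lia).
    assert (H2 : (if Nat.eq_dec j 0 then 1 else 0) <> j) by (destruct (Nat.eq_dec j 0); lia).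
    destruct (A _ H1 H2) as [i [[b [p [_ [_ [_ Hd]]]]] _]].
    destruct (g j); [|lia]. rewrite Nat.Div0.div_0_l, Nat.Div0.mod_0_l in Hd. discriminate. }
  set (N := (Nat.min (k * (d + 1)) t + 1) ^ (t / (k * (d + 1)) + 1)).
  assert (Hlen : length (map g (seq 0 n)) <= length (seq 1 (N - 1))).
  { apply NoDup_incl_length.
    - apply NoDup_map_NoDup_ForallPairs; [|apply seq_NoDup].
      intros a b Ha Hb E. apply in_seq in Ha. apply in_seq in Hb. apply Hinj; lia.
    - intros x Hx. apply in_map_iff in Hx. destruct Hx as [j [<- Hj]].
      apply in_seq in Hj. apply in_seq.
      destruct (Hg j ltac:(lia)) as [HN _]. specialize (Hpos j ltac:(lia)). fold N in HN. lia. }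
  rewrite length_map, !length_seq in Hlen. exact Hlen.
Qed.

Open Scope R_scope.

Lemma ln_le' x y : 0 < x -> x <= y -> ln x <= ln y.
Proof.
  intros Hx [H|H]; [left; apply ln_increasing; assumption| right; subst; reflexivity].
Qed.

Theorem theorem3 :
  exists c : R, 0 < c /\
    forall (t n k d : nat) (M : nat -> nat -> bool),
      (1 <= t)%nat -> (1 <= n)%nat -> (1 <= k)%nat ->
      Nat.divide (d + 1) t -> (4 <= k * (d + 1))%nat ->
      runlength_constrained t n d M -> disjunct t n k M ->
      Rmin (INR n) (c * INR (k * (d + 1)) * log2 (INR n) / log2 (INR (k * (d + 1))))
        <= INR t.
Proof.
  exists (1/4). split; [lra|].
  intros t n k d M Ht Hn Hk _ HK Hrl Hdis.
  destruct (Nat.le_gt_cases n t) as [Hnt|Hnt].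
  { eapply Rle_trans; [apply Rmin_l|]. apply le_INR; exact Hnt. }
  assert (Hn2 : (2 <= n)%nat) by lia.
  pose proof (count_bound t n k d M Hk Ht Hn2 Hrl Hdis) as Hc.
  set (K := (k * (d + 1))%nat) in *.
  destruct (Nat.lt_ge_cases t K) as [HtK|HtK].
  { exfalso. rewrite Nat.min_r in Hc by lia. rewrite Nat.div_small in Hc by lia.
    simpl in Hc. lia. }
  rewrite Nat.min_l in Hc by lia.
  set (s := (t / K + 1)%nat) in *.
  assert (HsK : (s * K <= 2 * t)%nat).
  { pose proof (Nat.mul_div_le t K ltac:(lia)). unfold s. nia. }
  assert (Hpow : (n <= (K + 1) ^ s)%nat) by lia.
  assert (Hln2 : 0 < ln 2).
  { rewrite <- ln_1. apply ln_increasing; lra. }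
  assert (HKr : 4 <= INR K) by (replace 4 with (INR 4) by (simpl; lra); apply le_INR; exact HK).
  assert (Hnr : 2 <= INR n) by (replace 2 with (INR 2) by (simpl; lra); apply le_INR; exact Hn2).
  assert (Hb : 0 < ln (INR K)).
  { rewrite <- ln_1. apply ln_increasing; lra. }
  assert (Ha : ln (INR n) <= INR s * ln (INR K + 1)).
  { rewrite <- ln_pow by lra.
    replace (INR K + 1) with (INR (K + 1)) by (rewrite plus_INR; simpl; lra).
    rewrite <- pow_INR. apply ln_le'; [lra|]. apply le_INR; exact Hpow. }
  assert (HK1 : ln (INR K + 1) <= 2 * ln (INR K)).
  { replace (2 * ln (INR K)) with (ln (INR K * INR K)) by (rewrite ln_mult by lra; ring).
    apply ln_le'; [lra|]. nra. }
  assert (HsKr : INR s * INR K <= 2 * INR t).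
  { rewrite <- mult_INR. replace 2 with (INR 2) by (simpl; lra). rewrite <- mult_INR.
    apply le_INR; exact HsK. }
  assert (Hs0 : 0 <= INR s) by apply pos_INR.
  assert (Key : INR K * ln (INR n) <= 4 * ln (INR K) * INR t).
  { apply Rle_trans with (INR K * (INR s * (2 * ln (INR K)))).
    - apply Rmult_le_compat_l; [lra|]. apply Rle_trans with (INR s * ln (INR K + 1)); [exact Ha|].
      apply Rmult_le_compat_l; assumption.
    - nra. }
  eapply Rle_trans; [apply Rmin_r|].
  unfold log2.
  replace (1 / 4 * INR K * (ln (INR n) / ln 2) / (ln (INR K) / ln 2))
    with (INR K * ln (INR n) * / (4 * ln (INR K))) by (field; lra).
  apply Rle_trans with (4 * ln (INR K) * INR t * / (4 * ln (INR K))).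
  - apply Rmult_le_compat_r; [left; apply Rinv_0_lt_compat; lra| exact Key].
  - right. field. lra.
Qed.
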